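(* For all $n,k\in\mathbb{N}$, $T(n,\omega\cdot k)\ge k^{n}$. Consequently $T(n,\omega\cdot k)=k^{n}$.
   Context: $\mathbb{N}=\{0,1,2,\dots\}$ and $[c]=\{1,\dots,c\}$; the convention $0^0=1$ is used. Each ordinal $\alpha$ is identified with the linearly ordered set of ordinals $\beta<\alpha$; $\omega\cdot k$ is the concatenation of $k$ copies of $\omega$ (elements $\omega\cdot b+a$ with $0\le b<k$, $a\in\mathbb{N}$). $\binom{S}{n}$ is the set of $n$-element subsets of $S$. $\approx$ denotes order-equivalence (existence of an order-preserving bijection). For a linearly ordered set $S$ and $n\in\mathbb{N}$, $T(n,S)$ is the least $t\in\mathbb{N}$ such that for every $c\ge 1$ and every coloring $\mathrm{COL}:\binom{S}{n}\to[c]$ there exists $S'\subseteq S$ with $S'\approx S$ and $|\mathrm{COL}(\binom{S'}{n})|\le t$; if no such $t$ exists, $T(n,S)=\infty$. *)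

(* Defs.v *)
From mathcomp Require Import all_boot.
Set Implicit Arguments. Unset Strict Implicit. Unset Printing Implicit Defensive.

(* A linearly ordered set is given as a subset S (a Prop-valued predicate) of a
   carrier X equipped with a strict order lt. *)

(* n-element subsets of A, represented (bijectively) as the lt-increasing
   sequences of length n with all entries in A. *)
Definition nsubset (X : eqType) (lt : rel X) (A : X -> Prop) (n : nat)
  (s : seq X) : Prop :=
  [/\ sorted lt s, size s = n & forall x, x \in s -> A x].

Definition order_equiv (X : eqType) (lt : rel X) (A' A : X -> Prop) : Prop :=
  exists f : X -> X,
    [/\ forall x, A x -> A' (f x),
        forall y, A' y -> exists2 x, A x & f x = y
      & forall x y, A x -> A y -> lt x y -> lt (f x) (f y)].

(* t is an admissible bound in the definition of T(n,S): every coloring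
   COL : binom(S,n) -> [c] (c >= 1) has S' ⊆ S, S' ~ S, with
   |COL(binom(S',n))| <= t (the image is covered by a list of length <= t). *)
Definition T_bound (X : eqType) (lt : rel X) (S : X -> Prop) (n t : nat) : Prop :=
  forall (c : nat), 1 <= c ->
  forall COL : seq X -> nat,
    (forall s, nsubset lt S n s -> 1 <= COL s <= c) ->
    exists S' : X -> Prop,
      [/\ forall x, S' x -> S x,
          order_equiv lt S' S
        & exists L : seq nat, size L <= t /\
            forall s, nsubset lt S' n s -> COL s \in L].

(* T(n,S) = t (finite): t is the least admissible bound. *)
Definition T_eq (X : eqType) (lt : rel X) (S : X -> Prop) (n t : nat) : Prop :=
  T_bound lt S n t /\ forall t', T_bound lt S n t' -> t <= t'.

(* The ordinal omega * k : the element omega*b + a is encoded as the pair (b, a)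
   with b < k, ordered lexicographically. *)
Definition lexlt : rel (nat * nat) :=
  fun p q => (p.1 < q.1) || ((p.1 == q.1) && (p.2 < q.2)).

Definition omega_times (k : nat) : nat * nat -> Prop := fun p => p.1 < k.

(* Main.v *)
Require Import Defs.
From mathcomp Require Import all_boot zify.
From Stdlib Require Import IndefiniteDescription Classical.
Set Implicit Arguments. Unset Strict Implicit. Unset Printing Implicit Defensive.
Set Warnings "-notation-overridden".

Lemma choice_fun (A B : Type) (P : A -> B -> Prop) :
  (forall a, exists b, P a b) -> exists f : A -> B, forall a, P a (f a).
Proof.
move=> H; exists (fun a => proj1_sig (constructive_indefinite_description _ (H a))).
by move=> a; case: (constructive_indefinite_description _ (H a)).
Qed.

Definition incr (h : nat -> nat) := forall x y, x < y -> h x < h y.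

Lemma incr_id : incr id. Proof. by []. Qed.
Lemma incr_comp f g : incr f -> incr g -> incr (f \o g).
Proof. by move=> hf hg x y /hg /hf. Qed.
Lemma incr_le f x y : incr f -> x <= y -> f x <= f y.
Proof. by move=> hf; rewrite leq_eqVlt => /orP[/eqP->//|/hf/ltnW]. Qed.
Lemma incr_refl f x y : incr f -> f x < f y -> x < y.
Proof. by move=> hf H; case: (leqP y x) => // /(incr_le hf); rewrite leqNgt H. Qed.
Lemma incr_ge f x : incr f -> x <= f x.
Proof. move=> hf; elim: x => // x IH; exact: leq_ltn_trans IH (hf _ _ (ltnSn x)). Qed.

Lemma sorted_refl F xs : incr F -> sorted ltn (map F xs) -> sorted ltn xs.
Proof.
move=> hF; rewrite sorted_map; apply: sub_sorted => x y /=; exact: incr_refl.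
Qed.

Lemma exmap (A : Type) (B : eqType) (C : Type) (F : A -> C) (g : B -> C) (r : seq B) :
  (forall y, y \in r -> exists x, F x = g y) -> exists xs, map F xs = map g r.
Proof.
elim: r => [|y r IH] H; first by exists [::].
case: (H y (mem_head _ _)) => x Hx.
case: IH => [z Hz|xs Hxs]; first by apply: H; rewrite in_cons Hz orbT.
by exists (x :: xs) => /=; rewrite Hx Hxs.
Qed.

Lemma pigeon C (c : nat -> nat) : (forall i, c i < C) ->
  exists col, forall N, exists2 i, N <= i & c i = col.
Proof.
elim: C c => [|C IH] c Hc; first by have := Hc 0.
case: (classic (forall N, exists2 i, N <= i & c i = C)) => [H|H]; first by exists C.
have [N0 HN0] : exists N0, forall i, N0 <= i -> c i <> C.
  apply: NNPP => H1; apply: H => N; apply: NNPP => H2; apply: H1; exists N.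
  by move=> i Hi Hci; apply: H2; exists i.
case: (IH (fun i => c (i + N0))) => [i|col Hcol].
  by have := Hc (i + N0); rewrite ltnS leq_eqVlt => /orP[/eqP/(HN0 _ (leq_addl _ _))|].
exists col => N; case: (Hcol N) => i Hi <-; exists (i + N0) => //.
exact: leq_trans Hi (leq_addr _ _).
Qed.

Fixpoint Gseq (st : (nat -> nat) -> (nat -> nat) * nat) (i : nat) : nat -> nat :=
  if i is i'.+1 then Gseq st i' \o (st (Gseq st i')).1 else id.

Fixpoint idxseq (nx : nat -> nat) (p : nat) : nat :=
  if p is p'.+1 then nx (idxseq nx p').+1 else nx 0.

Lemma ramsey n : forall C (chi : seq nat -> nat), (forall s, chi s < C) ->
  exists h, incr h /\ exists col, forall s, sorted ltn s -> size s = n ->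
    chi (map h s) = col.
Proof.
elim: n => [|n IH] C chi Hchi.
  by exists id; split=> //; exists (chi [::]) => -[]//; rewrite map_id.
have Hst : forall g : nat -> nat, exists p : (nat -> nat) * nat,
   [/\ incr p.1, (forall x, 0 < p.1 x) &
    forall s, sorted ltn s -> size s = n -> chi (g 0 :: map (g \o p.1) s) = p.2].
  move=> g; case: (IH C (fun s => chi (g 0 :: map (g \o succn) s))) => // h' [Hh' [col Hcol]].
  exists (succn \o h', col); split => //= s Ss Hs.
  by rewrite -(Hcol s Ss Hs) -map_comp.
case: (choice_fun Hst) => st Hst'.
pose G := Gseq st.
have GI : forall i, incr (G i).
  elim=> [|i IHi] //=; apply: incr_comp => //; by case: (Hst' (G i)).
pose c i := (st (G i)).2.
have Hc : forall i s, sorted ltn s -> size s = n -> chi (G i 0 :: map (G i.+1) s) = c i.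
  by move=> i s Ss Hs; case: (Hst' (G i)) => _ _ ->.
have reach : forall i d y, exists x, G i.+1 x = G (i.+1 + d) y.
  move=> i; elim=> [|d IHd] y; first by exists y; rewrite addn0.
  case: (IHd ((st (G (i.+1 + d))).1 y)) => x Hx; exists x.
  by rewrite Hx addnS.
have aI : incr (fun i => G i 0).
  have aS : forall i, G i 0 < G i.+1 0.
    move=> i /=; apply: GI; by case: (Hst' (G i)).
  move=> x y; apply: (@homo_ltn nat (fun i => G i 0) (fun a b => a < b)) => //.
  exact: ltn_trans.
have Hcb : forall i, c i < C.
  move=> i; rewrite -(Hc i (iota 0 n)) //; last by rewrite size_iota.
  exact: iota_ltn_sorted.
case: (pigeon Hcb) => col Hcol.
have Hcol' : forall N, exists i, N <= i /\ c i = col.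
  by move=> N; case: (Hcol N) => i H1 H2; exists i.
case: (choice_fun Hcol') => nx Hnx.
pose idx := idxseq nx.
have idxI : incr idx.
  have iS : forall p, idx p < idx p.+1 by move=> p /=; case: (Hnx (idx p).+1) => [].
  move=> x y; apply: (@homo_ltn nat idx (fun a b => a < b)) => //.
  exact: ltn_trans.
have idxc : forall p, c (idx p) = col.
  by case=> [|p] /=; [case: (Hnx 0) => []|case: (Hnx (idx p).+1)].
exists (fun p => G (idx p) 0); split; first exact: incr_comp aI idxI.
exists col => -[//|p0 r] /=; rewrite path_sortedE; last exact: ltn_trans.
case/andP=> /allP Hr Sr [Hs].
have [xs Hxs] : exists xs, map (G (idx p0).+1) xs = map (fun p => G (idx p) 0) r.
  apply: exmap => q /Hr /idxI /subnKC <-.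
  exact: reach.
rewrite -Hxs -(idxc p0); apply: Hc.
  apply: (@sorted_refl (G (idx p0).+1)) => //; rewrite Hxs.
  by apply: (homo_sorted (incr_comp aI idxI)).
by rewrite -Hs -(size_map (G (idx p0).+1)) Hxs size_map.
Qed.

Definition lexle : rel (nat * nat) :=
  fun p q => (p.1 < q.1) || ((p.1 == q.1) && (p.2 <= q.2)).
Definition alex : rel (nat * nat) :=
  fun p q => (p.2 < q.2) || ((p.2 == q.2) && (p.1 <= q.1)).
Lemma lexle_total : total lexle.
Proof. move=> [a b] [c d]; rewrite /lexle /=; apply/orP; lia. Qed.
Lemma lexle_trans : transitive lexle.
Proof. move=> [a b] [c d] [e g]; rewrite /lexle /= => /orP H1 /orP H2; apply/orP; lia. Qed.
Lemma lexle_anti : antisymmetric lexle.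
Proof. move=> [a b] [c d]; rewrite /lexle /= => /andP[/orP H1 /orP H2]; apply/eqP; rewrite /eq_op /=; apply/andP; lia. Qed.
Lemma alex_total : total alex.
Proof. move=> [a b] [c d]; rewrite /alex /=; apply/orP; lia. Qed.
Lemma alex_trans : transitive alex.
Proof. move=> [a b] [c d] [e g]; rewrite /alex /= => /orP H1 /orP H2; apply/orP; lia. Qed.
Lemma alex_anti : antisymmetric alex.
Proof. move=> [a b] [c d]; rewrite /alex /= => /andP[/orP H1 /orP H2]; apply/eqP; rewrite /eq_op /=; apply/andP; lia. Qed.
Lemma lexlt_le p q : lexlt p q -> lexle p q.
Proof. case: p q => [a b] [c d]; rewrite /lexlt /lexle /= => /orP H; apply/orP; lia. Qed.
Lemma lexlt_trans : transitive lexlt.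
Proof. move=> [a b] [c d] [e g]; rewrite /lexlt /= => /orP H1 /orP H2; apply/orP; lia. Qed.
Lemma lexlt_irr : irreflexive lexlt.
Proof. move=> [a b]; rewrite /lexlt /=; apply/negbTE/negP => /orP; lia. Qed.
Lemma lexlt_fst p q : lexlt p q -> p.1 <= q.1.
Proof. case: p q => [a b] [c d]; rewrite /lexlt /= => /orP; lia. Qed.
Lemma lexlt_snd p q : lexlt p q -> p.1 = q.1 -> p.2 < q.2.
Proof. case: p q => [a b] [c d]; rewrite /lexlt /= => /orP; lia. Qed.
Lemma lexle_lt p q : lexle p q -> p != q -> lexlt p q.
Proof. case: p q => [a b] [c d]; rewrite /lexlt /lexle /eq_op /= => /orP H1 H2; apply/orP; lia. Qed.


Fixpoint allseqs (k n : nat) : seq (seq nat) :=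
  if n is n'.+1 then [seq x :: s | x <- iota 0 k, s <- allseqs k n'] else [:: [::]].

Lemma size_allseqs k n : size (allseqs k n) = k ^ n.
Proof. elim: n => [|n IH] //=; by rewrite size_allpairs size_iota IH expnS. Qed.

Lemma uniq_allseqs k n : uniq (allseqs k n).
Proof.
elim: n => [|n IH] //=; apply: allpairs_uniq => //; first exact: iota_uniq.
by move=> [x s] [y t] _ _ /= [-> ->].
Qed.

Lemma mem_allseqs k n c : (c \in allseqs k n) = (size c == n) && all (fun x => x < k) c.
Proof.
elim: n c => [|n IH] [|x c] //=.
  by apply/negbTE/negP => /allpairsP [[a b] [_ _]].
apply/allpairsP/idP => [[[a b] [/= Ha Hb [-> ->]]]|/andP[Hs /andP[Hx Hc]]].
  by move: Hb; rewrite IH mem_iota /= in Ha *; rewrite eqSS Ha.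
by exists (x, c); rewrite /= mem_iota IH Hx -(eqSS (size c)) Hs Hc.
Qed.

Lemma multi n (cs : seq (seq nat)) C (chi : seq nat -> seq nat -> nat) :
  (forall c t, chi c t < C) -> exists H, incr H /\ forall c, c \in cs ->
  exists col, forall t, sorted ltn t -> size t = n -> chi c (map H t) = col.
Proof.
move=> Hchi; elim: cs => [|c cs [H [HI HH]]]; first by exists id; split.
case: (@ramsey n C (fun t => chi c (map H t))) => // H' [HI' [col Hcol]].
exists (H \o H'); split; first exact: incr_comp.
move=> c'; rewrite in_cons => /orP[/eqP->|/HH [col' Hcol']].
  by exists col => t St Ht; rewrite map_comp Hcol.
exists col' => t St Ht; rewrite map_comp Hcol' //; last by rewrite size_map.
exact: (homo_sorted HI').
Qed.

Lemma collect (cs : seq (seq nat)) (P : seq nat -> nat -> Prop) :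
  (forall c, c \in cs -> exists col, P c col) ->
  exists L, size L <= size cs /\ forall c, c \in cs -> exists2 col, col \in L & P c col.
Proof.
elim: cs => [|c cs IH] H; first by exists [::].
case: (H c (mem_head _ _)) => col Hcol.
case: IH => [c' Hc'|L [HL1 HL2]]; first by apply: H; rewrite in_cons Hc' orbT.
exists (col :: L); split => // c'; rewrite in_cons => /orP[/eqP->|/HL2 [x Hx Px]].
  by exists col => //; exact: mem_head.
by exists x => //; rewrite in_cons Hx orbT.
Qed.

Lemma sorted_lexlt s : sorted lexle s -> uniq s -> sorted lexlt s.
Proof.
rewrite (sorted_pairwise lexle_trans) (sorted_pairwise lexlt_trans) uniq_pairwise.
elim: s => [|x s IH] //= /andP[H1 H2] /andP[H3 H4]; rewrite IH // andbT.
apply/allP => y Hy; apply: lexle_lt; [exact: (allP H1)|exact: (allP H3)].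
Qed.

Lemma noinf (g : nat -> nat * nat) b a : (forall m, (g m).1 = b) ->
  (forall m, lexlt (g m) (g m.+1)) -> (forall m, lexlt (g m) (b, a)) -> False.
Proof.
move=> H1 H2 H3.
have I : incr (fun m => (g m).2).
  move=> x y; apply: (@homo_ltn nat (fun m => (g m).2) (fun a b => a < b)); first exact: ltn_trans.
  by move=> i; apply: lexlt_snd; rewrite ?H1.
have := incr_ge a I; have := lexlt_snd (H3 a); rewrite H1 /= => /(_ erefl); lia.
Qed.


Definition typ (s : seq (nat * nat)) := map fst (sort alex s).

Lemma blocks k (S' : nat * nat -> Prop) (f : nat * nat -> nat * nat) :
  (forall x, S' x -> omega_times k x) ->
  (forall x, omega_times k x -> S' (f x)) ->
  (forall x y, omega_times k x -> omega_times k y -> lexlt x y -> lexlt (f x) (f y)) ->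
  forall j i, j < k -> (f (j, i)).1 = j.
Proof.
move=> sub fA fM.
have fk : forall j i, j < k -> (f (j, i)).1 < k by move=> j i Hj; exact: (sub _ (fA (j, i) Hj)).
have lo : forall j, j < k -> forall i, j <= (f (j, i)).1.
  elim=> [|j IH] // Hj i; rewrite leqNgt; apply/negP => Hlt.
  have Hj' : j < k by lia.
  have Hm : forall m, lexlt (f (j, m)) (f (j.+1, i)).
    by move=> m; apply: fM => //; rewrite /lexlt /= ltnSn.
  have E1 : forall m, (f (j, m)).1 = j.
    move=> m; have := IH Hj' m; have := lexlt_fst (Hm m); lia.
  apply: (@noinf (fun m => f (j, m)) j (f (j.+1, i)).2) => // m.
    by apply: fM => //; rewrite /lexlt /= ltnn eqxx ltnSn.
  have Ej : (f (j.+1, i)).1 = j by have := E1 0; have := lexlt_fst (Hm 0); lia.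
  have <- : f (j.+1, i) = (j, (f (j.+1, i)).2) by move: Ej; case: (f (j.+1, i)) => a b /= ->.
  exact: Hm.
have up : forall d j i, j + d = k.-1 -> j < k -> (f (j, i)).1 <= j.
  elim=> [|d IH] j i Hd Hj.
    by have := fk j i Hj; lia.
  have Hj1 : j.+1 < k by lia.
  have IH' := IH j.+1 0 ltac:(lia) Hj1.
  rewrite leqNgt; apply/negP => Hgt.
  have Hm : forall m, lexlt (f (j, i + m)) (f (j.+1, 0)).
    by move=> m; apply: fM => //; rewrite /lexlt /= ltnSn.
  have Hge : forall m, (f (j, i)).1 <= (f (j, i + m)).1.
    case=> [|m]; first by rewrite addn0.
    by apply: lexlt_fst; apply: fM => //; rewrite /lexlt /= ltnn eqxx /=; lia.
  have E1 : forall m, (f (j, i + m)).1 = j.+1.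
    by move=> m; have := Hge m; have := lexlt_fst (Hm m); lia.
  apply: (@noinf (fun m => f (j, i + m)) j.+1 (f (j.+1, 0)).2) => // m.
    by apply: fM => //; rewrite /lexlt /= ltnn eqxx /=; lia.
  have Ej : (f (j.+1, 0)).1 = j.+1 by have := E1 0; have := lexlt_fst (Hm 0); lia.
  have <- : f (j.+1, 0) = (j.+1, (f (j.+1, 0)).2) by move: Ej; case: (f (j.+1, 0)) => a b /= ->.
  exact: Hm.
move=> j i Hj; apply/eqP; rewrite eqn_leq lo // andbT.
by apply: (up (k.-1 - j)) => //; lia.
Qed.

Lemma lower n k t : T_bound lexlt (omega_times k) n t -> k ^ n <= t.
Proof.
move=> HT.
pose A := allseqs k n.
pose COL s := (index (typ s) A).+1.
case: (HT (k ^ n).+1 erefl COL) => [s _|S' [sub [f [fA fS fM]] [L [szL HL]]]].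
  by rewrite /COL /= ltnS -(size_allseqs k n) index_size.
have bl := blocks sub fA fM.
have grow : forall j i, j < k -> i <= (f (j, i)).2.
  move=> j i Hj; apply: (@incr_ge (fun m => (f (j, m)).2)).
  move=> x y; apply: (@homo_ltn nat (fun m => (f (j, m)).2) (fun a b => a < b)); first exact: ltn_trans.
  move=> m; apply: lexlt_snd; last by rewrite !bl.
  by apply: fM => //; rewrite /lexlt /= ltnn eqxx ltnSn.
have build : forall c N, all (fun x => x < k) c -> exists P, [/\ map fst P = c,
    sorted ltn (map snd P), all (fun p => N <= p.2) P & forall p, p \in P -> S' p].
  elim=> [|j c IH] N /=; first by exists [::].
  case/andP => Hj Hc; case: (IH (f (j, N)).2.+1 Hc) => P [H1 H2 H3 H4].
  have g := grow j N Hj.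
  exists (f (j, N) :: P); split.
  - by rewrite /= H1 bl.
  - rewrite /= path_sortedE; last exact: ltn_trans.
    by rewrite H2 andbT all_map.
  - rewrite /= g /=; apply/allP => p /(allP H3) /= Hp.
    exact: leq_trans g (ltnW Hp).
  - move=> p; rewrite in_cons => /orP[/eqP->|/H4//]; exact: fA.
have realize : forall c, c \in A -> (index c A).+1 \in L.
  move=> c; rewrite mem_allseqs => /andP[/eqP Hsz Hc].
  case: (build c 0 Hc) => P [H1 H2 _ H4].
  have UP : uniq P.
    by apply: (@map_uniq _ _ snd); apply: (sorted_uniq ltn_trans ltnn).
  pose s := sort lexle P.
  have Ps : perm_eq s P by rewrite perm_sort.
  have : nsubset lexlt S' n s.
    split.
    - apply: sorted_lexlt; last by rewrite (perm_uniq Ps).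
      rewrite /s; apply: sort_sorted; exact: lexle_total.
    - by rewrite (perm_size Ps) -Hsz -H1 size_map.
    - by move=> x; rewrite (perm_mem Ps) => /H4.
  move/HL; rewrite /COL /typ.
  have -> : sort alex s = P.
    apply: (sorted_eq alex_trans alex_anti); first by apply: sort_sorted; exact: alex_total.
    - by move: H2; rewrite sorted_map; apply: sub_sorted => p q /= H; rewrite /alex H.
    - by rewrite perm_sort.
  by rewrite H1.
have U : uniq (map (fun c => (index c A).+1) A).
  rewrite map_inj_in_uniq ?uniq_allseqs // => x y Hx Hy [E].
  by rewrite -(nth_index [::] Hx) E nth_index.
have := uniq_leq_size U (_ : {subset _ <= L}).
rewrite size_map size_allseqs => H.
  apply: leq_trans (H _) szL.
by move=> x /mapP [c Hc ->]; exact: realize.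
Qed.


Lemma upper n k : T_bound lexlt (omega_times k) n (k ^ n).
Proof.
move=> cc Hcc COL HCOL.
pose chi c t := minn (COL (sort lexle (zip c t))) cc.
case: (@multi n (allseqs k n) cc.+1 chi) => [c t|H [HI HH]].
  by rewrite ltnS geq_minr.
case: (collect HH) => L [szL HL].
pose F m := (m %% k, H m).
exists (fun x => x.1 < k /\ exists m, x = F m); split.
- by move=> x [].
- exists (fun p => (p.1, H (p.2 * k + p.1))); split.
  + move=> [j i] /= Hj; split => //; exists (i * k + j).
    by rewrite /F modnMDl modn_small.
  + move=> y [Hy [m Em]]; exists (m %% k, m %/ k); rewrite Em /= in Hy *; first by [].
    by rewrite /F -divn_eq.
  + move=> [j i] [j' i'] /= Hj Hj'; rewrite /lexlt /= => /orP[->//|/andP[/eqP <- Hi]].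
    rewrite ltnn eqxx /=; apply: HI; rewrite ltn_add2r ltn_pmul2r //; exact: leq_ltn_trans (leq0n j) Hj.
- exists L; split; first by rewrite size_allseqs in szL.
  move=> s [Ss Hsz Hin].
  have [t0 Ht0] : exists t0, map F t0 = map id s.
    by apply: exmap => y /Hin [_ [m ->]]; exists m.
  rewrite map_id in Ht0.
  have Us : uniq s by apply: (sorted_uniq lexlt_trans lexlt_irr).
  have Ut0 : uniq t0 by move: Us; rewrite -Ht0 => /map_uniq.
  pose t' := sort leq t0.
  have Pt : perm_eq t' t0 by rewrite perm_sort.
  have St' : sorted ltn t'.
    by rewrite ltn_sorted_uniq_leq (perm_uniq Pt) Ut0 sort_sorted //; exact: leq_total.
  have szt' : size t' = n by rewrite (perm_size Pt) -Hsz -Ht0 size_map.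
  pose c := map (fun m => m %% k) t'.
  have Hc : c \in allseqs k n.
    rewrite mem_allseqs size_map szt' eqxx /=; apply/allP => x /mapP [m Hm ->].
    have : F m \in s by rewrite -Ht0; apply: map_f; rewrite -(perm_mem Pt).
    by case/Hin.
  case: (HL c Hc) => col Hcol Hcol'.
  have Es : s = sort lexle (zip c (map H t')).
    apply: (sorted_eq lexle_trans lexle_anti).
    - exact: (sub_sorted (@lexlt_le) Ss).
    - exact: (sort_sorted lexle_total).
    rewrite perm_sym perm_sort /c zip_map -/F -Ht0.
    exact: perm_map.
  have : chi c (map H t') = col by apply: Hcol'.
  rewrite /chi -Es => Ecol; suff -> : COL s = col by [].
  rewrite -Ecol.
  have: COL s <= cc.
    case/andP: (HCOL s (And3 Ss Hsz (fun x Hx => proj1 (Hin x Hx)))) => //.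
  by move/minn_idPl => ->.
Qed.


Theorem theorem5p2 (n k : nat) :
  (forall t, T_bound lexlt (omega_times k) n t -> k ^ n <= t) /\
  T_eq lexlt (omega_times k) n (k ^ n).
Proof.
split; first by move=> t; exact: lower.
split; first exact: upper.
by move=> t; exact: lower.
Qed.
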